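(* Let $n\geq 1$. A subset $T\subseteq S_n$ is Jacobi if and only if ${\sf Sum}(T)\in{\rm Ker}(\beta_n)$.
   Context: A Lie ring is a Lie algebra over $\mathbb Z$; the left-normed bracket is $[a_1]=a_1$, $[a_1,\dots,a_n]=[[a_1,\dots,a_{n-1}],a_n]$. $S_n$ is the symmetric group on $\{1,\dots,n\}$. A subset $T\subseteq S_n$ is Jacobi if $\sum_{\sigma\in T}[a_{\sigma(1)},\dots,a_{\sigma(n)}]=0$ for all elements $a_1,\dots,a_n$ of every Lie ring. Let $\mathbb Z\langle x_1,\dots,x_n\rangle$ be the free associative ring on $x_1,\dots,x_n$, regarded as a Lie ring with bracket $[u,v]=uv-vu$. Let $\gamma_n$ be the additive subgroup generated by the monomials $x_{\sigma(1)}\cdots x_{\sigma(n)}$, $\sigma\in S_n$ (a free abelian group with these monomials as basis). Let $\beta_n:\gamma_n\to\gamma_n$ be the homomorphism defined on the basis by $\beta_n(x_{\sigma(1)}\cdots x_{\sigma(n)})=[x_{\sigma(1)},\dots,x_{\sigma(n)}]$. For $T\subseteq S_n$, ${\sf Sum}(T)=\sum_{\sigma\in T}x_{\sigma(1)}\cdots x_{\sigma(n)}\in\gamma_n$. *)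

(* Defs.v *)
From HB Require Import structures.
From mathcomp Require Import all_boot all_order all_algebra all_fingroup.
Set Implicit Arguments. Unset Strict Implicit. Unset Printing Implicit Defensive.
Import GRing.Theory.
Local Open Scope ring_scope.

Definition is_lie_bracket (L : zmodType) (br : L -> L -> L) : Prop :=
  [/\ forall x y z, br (x + y) z = br x z + br y z,
      forall x y z, br x (y + z) = br x y + br x z,
      forall x, br x x = 0 &
      forall x y z, br (br x y) z + br (br y z) x + br (br z x) y = 0].

(* left-normed bracket [b_1, ..., b_k] = [[b_1,...,b_{k-1}], b_k] of a
   nonempty list (head default only used for the empty list) *)
Definition lnbr (T : Type) (br : T -> T -> T) (d : T) (l : seq T) : T :=
  foldl br (head d l) (behead l).

(* [a_{sigma(1)}, ..., a_{sigma(n)}] ; indices are 0..n-1 *)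
Definition perm_bracket (T : Type) (br : T -> T -> T) (d : T) (n : nat)
    (a : 'I_n -> T) (s : 'S_n) : T :=
  lnbr br d [seq a (s i) | i <- enum 'I_n].

Definition Jacobi (n : nat) (T : {set 'S_n}) : Prop :=
  forall (L : zmodType) (br : L -> L -> L), is_lie_bracket br ->
  forall a : 'I_n -> L, \sum_(s in T) perm_bracket br 0 a s = 0.

(* An element is given by its coefficient function on words (seq 'I_n);
   we allow arbitrary coefficient functions, i.e. we work in the ring of
   noncommutative formal power series, which contains Z<x_1,...,x_n> as a
   subring; the operations restrict to the usual ones on polynomials. *)
Definition nc (n : nat) := seq 'I_n -> int.

Definition nc0 n : nc n := fun _ => 0.
Definition ncadd n (f g : nc n) : nc n := fun w => f w + g w.
Definition ncopp n (f : nc n) : nc n := fun w => - f w.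
Definition ncmul n (f g : nc n) : nc n :=
  fun w => \sum_(i < (size w).+1) f (take i w) * g (drop i w).
Definition ncbr n (f g : nc n) : nc n := ncadd (ncmul f g) (ncopp (ncmul g f)).
Definition ncx n (i : 'I_n) : nc n := fun w => (w == [:: i])%:Z.

(* gamma_n: free abelian group on the monomials x_{s(1)}...x_{s(n)}, s in S_n,
   represented by coefficient vectors *)
Definition gamma (n : nat) := {ffun 'S_n -> int}.

Definition monomial n (s : 'S_n) : nc n :=
  fun w => (w == [seq s i | i <- enum 'I_n])%:Z.

Definition gamma_incl n (c : gamma n) : nc n :=
  fun w => \sum_(s : 'S_n) c s * monomial s w.

(* beta_n : gamma_n -> gamma_n, extended additively from
   x_{s(1)}...x_{s(n)} |-> [x_{s(1)},...,x_{s(n)}]; the value is given as an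
   element of Z<x> *)
Definition beta n (c : gamma n) : nc n :=
  fun w => \sum_(s : 'S_n) c s * (perm_bracket (@ncbr n) (@nc0 n) (@ncx n) s) w.

Definition in_ker_beta n (c : gamma n) : Prop := forall w, beta c w = 0.

Definition SumT n (T : {set 'S_n}) : gamma n := [ffun s => (s \in T)%:Z].

(* Main.v *)
Require Import Defs.
From HB Require Import structures.
From mathcomp Require Import all_boot all_order all_algebra all_fingroup.
From mathcomp Require Import boolp functions zify.
Set Implicit Arguments. Unset Strict Implicit. Unset Printing Implicit Defensive.
Import GRing.Theory.
Local Open Scope ring_scope.
Module A.

Definition comb (n : nat) := seq (int * seq 'I_n).
Definition stepc n (P : comb n) (y : 'I_n) : comb n :=
  [seq (p.1, rcons p.2 y) | p <- P] ++ [seq (- p.1, y :: p.2) | p <- P].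
Definition rp n (y0 : 'I_n) (ys : seq 'I_n) : comb n :=
  foldl (@stepc n) [:: (1, [:: y0])] ys.
Definition Cp n (l1 l2 : seq 'I_n) : comb n :=
  if l1 is y0 :: ys then [seq (- p.1, p.2 ++ l2) | p <- rp y0 ys]
  else [:: (1, l2)].

Section Lie.
Variables (L : zmodType) (br : L -> L -> L) (H : is_lie_bracket br).

Lemma brDl x y z : br (x + y) z = br x z + br y z.
Proof. by case: H. Qed.
Lemma brDr x y z : br x (y + z) = br x y + br x z.
Proof. by case: H. Qed.
Lemma brxx x : br x x = 0.
Proof. by case: H. Qed.
Lemma brJ x y z : br (br x y) z + br (br y z) x + br (br z x) y = 0.
Proof. by case: H. Qed.

Lemma br0l y : br 0 y = 0.
Proof. by apply: (addrI (br 0 y)); rewrite -brDl !addr0. Qed.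
Lemma br0r y : br y 0 = 0.
Proof. by apply: (addrI (br y 0)); rewrite -brDr !addr0. Qed.
Lemma brNl x y : br (- x) y = - br x y.
Proof. by apply: (addrI (br x y)); rewrite -brDl !subrr br0l. Qed.
Lemma brNr x y : br x (- y) = - br x y.
Proof. by apply: (addrI (br x y)); rewrite -brDr !subrr br0r. Qed.
Lemma brC x y : br x y = - br y x.
Proof.
have := brxx (x + y); rewrite brDl !brDr !brxx add0r addr0 => /eqP.
by rewrite addr_eq0 => /eqP.
Qed.
Lemma brMnl x y k : br (x *+ k) y = br x y *+ k.
Proof. by elim: k => [|k IH]; rewrite ?br0l // !mulrS brDl IH. Qed.
Lemma brMzl x y (c : int) : br (x *~ c) y = br x y *~ c.
Proof.
case: c => k; first by rewrite -!pmulrn brMnl.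
by rewrite !NegzE !mulrNz brNl -!pmulrn brMnl.
Qed.
Lemma brsuml (I : Type) (r : seq I) (F : I -> L) y :
  br (\sum_(i <- r) F i) y = \sum_(i <- r) br (F i) y.
Proof.
elim: r => [|i r IH]; first by rewrite !big_nil br0l.
by rewrite !big_cons brDl IH.
Qed.
Lemma brJ' u v w : br u (br v w) = br (br u v) w - br (br u w) v.
Proof.
have := brJ u v w; rewrite (brC (br v w)) (brC w u) brNl.
move/eqP; rewrite -addrA -opprD subr_eq0 => /eqP ->.
by rewrite addrK.
Qed.

Variables (n : nat) (a : 'I_n -> L).
Definition ln u (z : seq 'I_n) := foldl br u (map a z).
Definition act (P : comb n) u := \sum_(p <- P) ln u p.2 *~ p.1.

Lemma lnD x y z : ln (x + y) z = ln x z + ln y z.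
Proof. by elim: z x y => [|i z IH] x y //=; rewrite /ln /= brDl -IH. Qed.
Lemma ln0 z : ln 0 z = 0.
Proof. by elim: z => [|i z IH] //; rewrite /ln /= br0l. Qed.
Lemma lnN x z : ln (- x) z = - ln x z.
Proof. by apply: (addrI (ln x z)); rewrite -lnD !subrr ln0. Qed.
Lemma lnMz x z c : ln (x *~ c) z = ln x z *~ c.
Proof.
elim: z x => [|i z IH] x //; rewrite /ln /= brMzl; exact: IH.
Qed.
Lemma lnsum (I : Type) (r : seq I) (F : I -> L) z :
  ln (\sum_(i <- r) F i) z = \sum_(i <- r) ln (F i) z.
Proof.
elim: r => [|i r IH]; first by rewrite !big_nil ln0.
by rewrite !big_cons lnD IH.
Qed.
Lemma ln_cat u z1 z2 : ln u (z1 ++ z2) = ln (ln u z1) z2.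
Proof. by rewrite /ln map_cat foldl_cat. Qed.
Lemma ln_rcons u z y : ln u (rcons z y) = br (ln u z) (a y).
Proof. by rewrite /ln map_rcons foldl_rcons. Qed.

Lemma rp_spec ys : forall y0 u,
  br u (foldl br (a y0) (map a ys)) = act (rp y0 ys) u.
Proof.
elim/last_ind: ys => [|ys y IH] y0 u.
  by rewrite /act /rp /= big_seq1 mulr1z.
rewrite map_rcons foldl_rcons /rp foldl_rcons -/(rp y0 ys) brJ' !IH.
rewrite /act /stepc big_cat !big_map /= brsuml.
rewrite [X in _ - X](_ : _ = \sum_(p <- rp y0 ys) ln (br u (a y)) p.2 *~ p.1).
  rewrite -sumrN; congr (_ + _); apply: eq_bigr => p _.
    by rewrite ln_rcons brMzl.
  by rewrite mulrNz.
by [].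
Qed.

Lemma Cp_spec x0 l1 l2 :
  lnbr br 0 (map a (l1 ++ x0 :: l2)) = act (Cp l1 l2) (a x0).
Proof.
case: l1 => [|y0 ys]; first by rewrite /act /= big_seq1 mulr1z.
rewrite /lnbr /= map_cat foldl_cat /= brC rp_spec.
rewrite -/(ln _ l2) /act lnN lnsum -sumrN big_map; apply: eq_bigr => p _ /=.
by rewrite lnMz -ln_cat mulrNz.
Qed.
End Lie.

End A.
Import A.

Section NC.
Variable n : nat.
Implicit Types f g h x y z : nc n.

Lemma addE f g w : (f + g) w = f w + g w.
Proof. by []. Qed.
Lemma zeroE w : (0 : nc n) w = 0.
Proof. by []. Qed.

Lemma ncmul_nat f g w :
  ncmul f g w = \sum_(0 <= i < (size w).+1) f (take i w) * g (drop i w).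
Proof. by rewrite big_mkord. Qed.

Lemma ncmulDl f g h w : ncmul (f + g) h w = ncmul f h w + ncmul g h w.
Proof. by rewrite /ncmul -big_split; apply: eq_bigr => i _; rewrite mulrDl. Qed.
Lemma ncmulDr f g h w : ncmul h (f + g) w = ncmul h f w + ncmul h g w.
Proof. by rewrite /ncmul -big_split; apply: eq_bigr => i _; rewrite mulrDr. Qed.
Lemma ncmulNl f g w : ncmul (- f) g w = - ncmul f g w.
Proof. by rewrite /ncmul -sumrN; apply: eq_bigr => i _; rewrite mulNr. Qed.
Lemma ncmulNr f g w : ncmul g (- f) w = - ncmul g f w.
Proof. by rewrite /ncmul -sumrN; apply: eq_bigr => i _; rewrite mulrN. Qed.

Lemma tri (F : nat -> nat -> int) N :
  \sum_(0 <= i < N) \sum_(0 <= j < i.+1) F i j =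
  \sum_(0 <= j < N) \sum_(j <= i < N) F i j.
Proof.
transitivity (\sum_(0 <= i < N) \sum_(0 <= j < N) (if (j <= i)%N then F i j else 0)).
  rewrite !big_nat; apply: eq_bigr => i /andP [_ iN].
  rewrite (big_nat_widen _ _ _ _ _ iN) big_mkcond /=.
  by rewrite !big_nat; apply: eq_bigr => j /andP [_ jN]; rewrite ltnS.
rewrite exchange_big_nat; apply: eq_bigr => j _.
rewrite (big_nat_widenl _ _ _ _ _ (leq0n j)) big_mkcond /=.
by apply: eq_bigr => i _.
Qed.

Lemma ncmulA f g h w : ncmul (ncmul f g) h w = ncmul f (ncmul g h) w.
Proof.
rewrite !ncmul_nat.
transitivity (\sum_(0 <= i < (size w).+1) \sum_(0 <= j < i.+1)
   f (take j w) * g (take (i - j) (drop j w)) * h (drop i w)).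
  rewrite !big_nat; apply: eq_bigr => i /andP [_ iw].
  rewrite ncmul_nat size_takel // big_distrl /= !big_nat.
  apply: eq_bigr => j /andP [_ ji].
  rewrite take_takel // take_drop subnK //.
rewrite tri !big_nat; apply: eq_bigr => j /andP [_ jw].
rewrite ncmul_nat size_drop big_distrr /=.
rewrite -{1}(add0n j) big_addn subSn // !big_nat; apply: eq_bigr => k _.
by rewrite addnK drop_drop mulrA.
Qed.

Lemma ncbr_l x y z w :
  ncmul (ncbr x y) z w = ncmul x (ncmul y z) w - ncmul y (ncmul x z) w.
Proof.
have := ncmulDl (ncmul x y) (- ncmul y x) z w.
by rewrite ncmulNl !ncmulA.
Qed.
Lemma ncbr_r x y z w :
  ncmul z (ncbr x y) w = ncmul z (ncmul x y) w - ncmul z (ncmul y x) w.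
Proof.
have := ncmulDr (ncmul x y) (- ncmul y x) z w.
by rewrite ncmulNr.
Qed.

Lemma ncbrE x y w : ncbr x y w = ncmul x y w - ncmul y x w.
Proof. by []. Qed.
Lemma ncbr_lie : is_lie_bracket (@ncbr n).
Proof.
split.
- move=> x y z; apply/funext => w.
  by rewrite /ncbr /ncadd /ncopp ncmulDl ncmulDr /= opprD addrACA.
- move=> x y z; apply/funext => w.
  by rewrite /ncbr /ncadd /ncopp ncmulDl ncmulDr /= opprD addrACA.
- by move=> x; apply/funext => w; rewrite /ncbr /ncadd /ncopp subrr.
- move=> x y z; apply/funext => w.
  rewrite !addE !ncbrE !ncbr_l !ncbr_r zeroE.
  move: (ncmul x (ncmul y z) w) (ncmul x (ncmul z y) w) (ncmul y (ncmul x z) w)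
    (ncmul y (ncmul z x) w) (ncmul z (ncmul x y) w) (ncmul z (ncmul y x) w).
  move=> *; lia.
Qed.

Lemma ncmul_x_r f (y : 'I_n) (v : seq 'I_n) (y' : 'I_n) :
  ncmul f (ncx y) (rcons v y') = f v * (y' == y)%:Z.
Proof.
rewrite /ncmul size_rcons big_ord_recr /= drop_oversize ?size_rcons //.
rewrite /ncx /= mulr0 addr0 big_ord_recr /= -cats1 take_size_cat //.
rewrite drop_size_cat //= eqseq_cons andbT big1 ?add0r //.
move=> i _; rewrite /ncx.
suff -> : (drop i (v ++ [:: y']) == [:: y]) = false by rewrite mulr0.
apply/negbTE/eqP => /(congr1 size); rewrite size_drop size_cat /=.
have := ltn_ord i; lia.
Qed.
Lemma ncmul_x_l f (y : 'I_n) (v : seq 'I_n) (y' : 'I_n) :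
  ncmul (ncx y) f (y' :: v) = (y' == y)%:Z * f v.
Proof.
rewrite /ncmul big_ord_recl /= /ncx /= mul0r add0r big_ord_recl /=.
rewrite /bump /= take0 drop0 eqseq_cons andbT big1 ?addr0 //.
move=> i _.
suff -> : (take (bump 0 (bump 0 i)) (y' :: v) == [:: y]) = false by rewrite mul0r.
apply/negbTE/eqP => /(congr1 size); rewrite size_take /= /bump /=.
have := ltn_ord i; case: ifP => _ /=; lia.
Qed.

Lemma coef_ln (x0 : 'I_n) (z : seq 'I_n) : x0 \notin z -> forall w,
  ln (@ncbr n) (@ncx n) (ncx x0) z (x0 :: w) = (w == z)%:Z.
Proof.
elim/last_ind: z => [|z y IH] Hz w.
  by rewrite /ln /= /ncx eqseq_cons eqxx.
have Hy : x0 != y by move: Hz; rewrite mem_rcons in_cons negb_or => /andP [].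
have Hz' : x0 \notin z by move: Hz; rewrite mem_rcons in_cons negb_or => /andP [].
rewrite ln_rcons ncbrE ncmul_x_l (negbTE Hy) mul0r subr0.
case/lastP: w => [|w y'].
  by rewrite -[[:: x0]]/(rcons [::] x0) ncmul_x_r (negbTE Hy) mulr0; case: (z).
rewrite -rcons_cons ncmul_x_r IH // eqseq_rcons; by case: (w == z); case: (y' == y).
Qed.
End NC.

Definition word n (s : 'S_n) : seq 'I_n := [seq s i | i <- enum 'I_n].
Definition CS n (x0 : 'I_n) (s : 'S_n) : comb n :=
  Cp (take (index x0 (word s)) (word s)) (drop (index x0 (word s)).+1 (word s)).

Lemma word_mem n (x0 : 'I_n) s : x0 \in word s.
Proof. by apply/mapP; exists (s^-1 x0)%g; rewrite ?mem_enum ?permKV. Qed.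
Lemma word_uniq n (s : 'S_n) : uniq (word s).
Proof. by rewrite map_inj_uniq ?enum_uniq //; apply: perm_inj. Qed.

Lemma word_split n (x0 : 'I_n) s :
  word s = take (index x0 (word s)) (word s) ++ x0 :: drop (index x0 (word s)).+1 (word s).
Proof.
rewrite -{1}(cat_take_drop (index x0 (word s)) (word s)); congr (_ ++ _).
by rewrite (drop_nth x0) ?index_mem ?word_mem // nth_index ?word_mem.
Qed.

Lemma pb_CS (L : zmodType) (br : L -> L -> L) (H : is_lie_bracket br) n
   (a : 'I_n -> L) (x0 : 'I_n) s :
  perm_bracket br 0 a s = A.act br a (CS x0 s) (a x0).
Proof.
rewrite /perm_bracket /CS.
have E : [seq a (s i) | i <- enum 'I_n] = map a (word s).
  by rewrite /word; elim: (enum 'I_n) => //= i l ->.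
rewrite E {1}(word_split x0 s).
exact: Cp_spec.
Qed.

Lemma rp_notin n (x0 : 'I_n) y0 ys : x0 \notin y0 :: ys ->
  forall p, p \in rp y0 ys -> x0 \notin p.2.
Proof.
elim/last_ind: ys => [|ys y IH] Hx p.
  by rewrite /rp /= inE => /eqP -> /=.
have Hy : x0 != y by move: Hx; rewrite -rcons_cons mem_rcons in_cons negb_or => /andP [].
have Hx' : x0 \notin y0 :: ys by move: Hx; rewrite -rcons_cons mem_rcons in_cons negb_or => /andP [].
rewrite /rp foldl_rcons -/(rp y0 ys) /stepc mem_cat => /orP [] /mapP [q Hq ->] /=.
  by rewrite mem_rcons in_cons negb_or Hy IH.
by rewrite in_cons negb_or Hy IH.
Qed.

Lemma CS_notin n (x0 : 'I_n) s p : p \in CS x0 s -> x0 \notin p.2.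
Proof.
have := word_uniq s; rewrite {1}(word_split x0 s) /CS.
move: (take _ _) (drop _ _) => l1 l2.
rewrite cat_uniq => /and3P [_ Hh /andP [Hl2 _]].
have Hl1 : x0 \notin l1 by move: Hh; rewrite /= negb_or => /andP [].
case: l1 Hl1 Hh => [|y0 ys] Hl1 _ /=.
  by rewrite inE => /eqP ->.
move=> /mapP [q Hq ->] /=; rewrite mem_cat negb_or Hl2 andbT.
exact: (rp_notin Hl1).
Qed.

Lemma evsum n (I : Type) (r : seq I) (P : pred I) (F : I -> nc n) w :
  (\sum_(i <- r | P i) F i) w = \sum_(i <- r | P i) F i w.
Proof. by elim/big_rec2: _ => // i y f _ <-. Qed.

Lemma evMz n (f : nc n) (c : int) w : (f *~ c) w = f w *~ c.
Proof.
case: c => k; first by rewrite -!pmulrn natmulfctE.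
by rewrite !NegzE !mulrNz -!pmulrn natmulfctE.
Qed.

Theorem lemma2 (n : nat) (hn : (1 <= n)%N) (T : {set 'S_n}) :
  Jacobi T <-> in_ker_beta (SumT T).
Proof.
have betaE : forall w, beta (SumT T) w =
    \sum_(s in T) perm_bracket (@ncbr n) (@nc0 n) (@ncx n) s w.
  move=> w; rewrite /beta [RHS]big_mkcond; apply: eq_bigr => s _.
  by rewrite /SumT ffunE; case: (s \in T); rewrite ?mul1r ?mul0r.
set x0 := Ordinal hn.
split.
  move=> J w; rewrite betaE.
  have := J _ _ (@ncbr_lie n) (@ncx n) => /(congr1 (fun f => f w)).
  by rewrite evsum.
move=> K L br H a.
under eq_bigr do rewrite (pb_CS H a x0).
set Z := undup [seq p.2 | p <- flatten [seq CS x0 s | s <- enum 'S_n]].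
have HZ : forall s p, p \in CS x0 s -> p.2 \in Z.
  move=> s p Hp; rewrite mem_undup; apply: map_f.
  by apply/flattenP; exists (CS x0 s) => //; apply: map_f; rewrite mem_enum.
have HZ' : forall z, z \in Z -> x0 \notin z.
  move=> z; rewrite mem_undup => /mapP [p /flattenP [c /mapP [s _ ->] Hp] ->].
  exact: CS_notin Hp.
transitivity (\sum_(s in T) \sum_(z <- Z) \sum_(p <- CS x0 s)
   ln br a (a x0) z *~ ((z == p.2)%:Z * p.1)).
  apply: eq_bigr => s _; rewrite exchange_big /A.act big_seq [RHS]big_seq.
  apply: eq_bigr => p Hp.
  rewrite (bigD1_seq p.2) ?undup_uniq ?HZ //=.
  rewrite [X in _ + X]big1 ?addr0.
      by case: eqP => // _; rewrite mul1r.
    by move=> z /negbTE ->; rewrite mul0r mulr0z.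
  exact: (HZ s).
rewrite exchange_big /= big_seq big1 // => z Hz.
transitivity (ln br a (a x0) z *~
   (\sum_(s in T) \sum_(p <- CS x0 s) ((z == p.2)%:Z * p.1))).
  rewrite mulrz_sumr; apply: eq_bigr => s _; by rewrite mulrz_sumr.
suff -> : \sum_(s in T) \sum_(p <- CS x0 s) (z == p.2)%:Z * p.1 = 0 by rewrite mulr0z.
transitivity (beta (SumT T) (x0 :: z)); last exact: K.
rewrite betaE.
apply: eq_bigr => s _.
rewrite (pb_CS (@ncbr_lie n) (@ncx n) x0) /A.act evsum big_seq [RHS]big_seq.
apply: eq_bigr => p Hp.
by rewrite evMz coef_ln ?(CS_notin Hp) // mulrzz.
Qed.
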